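(* There exists an absolute constant $C>0$ such that the following holds. Let $\tau,n,m,t\in\mathbb{N}^+$, let $W_1,\dots,W_\tau\in\mathbb{R}^{n\times m}$ be matrices, let $\alpha_1,\dots,\alpha_\tau\ge 0$ be weights, and let $S_1,\dots,S_\tau\in\mathbb{R}^{t\times n}$ be mutually independent CountSketch matrices, each with sketch size $t$. Then for any fixed $\theta\in\mathbb{R}^m$, with probability at least $0.99$, \[ \left|\,\Big\|\Big(\sum_{i=1}^{\tau}\sqrt{\alpha_i}\,S_iW_i\Big)\theta\Big\|_2^2-\sum_{i=1}^{\tau}\alpha_i\|W_i\theta\|_2^2\right|\le \frac{C}{\sqrt{t}}\sum_{i=1}^{\tau}\alpha_i\|W_i\theta\|_2^2 . \]
   Context: A CountSketch matrix $S\in\mathbb{R}^{t\times n}$ with sketch size $t$ is defined as follows: draw a 2-wise independent hash function $h:[n]\to[t]$ (so each $h(k)$ is uniformly distributed on $[t]$ and the values are pairwise independent) and, independently, a 4-wise independent hash function $\sigma:[n]\to\{-1,1\}$ (each $\sigma(k)$ uniform on $\{-1,1\}$, any four values independent). Then $S_{k,j}=\sigma(j)$ if $h(j)=k$ and $S_{k,j}=0$ otherwise; equivalently $(Sy)_k=\sum_{j:\,h(j)=k}\sigma(j)\,(y)_j$. The probability is over the randomness of $S_1,\dots,S_\tau$. *)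

(* Defs.v *)
From HB Require Import structures.
From mathcomp Require Import all_boot all_order all_algebra.
From mathcomp Require Import reals Rstruct.
From Stdlib Require Import Rdefinitions.
Set Implicit Arguments. Unset Strict Implicit. Unset Printing Implicit Defensive.
Import Order.TTheory GRing.Theory Num.Theory.
Local Open Scope ring_scope.

Definition is_pmf (Omega : finType) (p : Omega -> R) : Prop :=
  (forall w, 0 <= p w) /\ \sum_(w : Omega) p w = 1.

Definition Pr (Omega : finType) (p : Omega -> R) (E : Omega -> bool) : R :=
  \sum_(w : Omega | E w) p w.

Definition indep2 (Omega : finType) (p : Omega -> R) (A B : finType)
  (X : Omega -> A) (Y : Omega -> B) : Prop :=
  forall a b, Pr p (fun w => (X w == a) && (Y w == b))
              = Pr p (fun w => X w == a) * Pr p (fun w => Y w == b).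

Definition mutually_indep (Omega : finType) (p : Omega -> R) (tau : nat)
  (T : finType) (X : 'I_tau -> Omega -> T) : Prop :=
  forall f : 'I_tau -> T,
    Pr p (fun w => [forall i, X i w == f i])
    = \prod_(i < tau) Pr p (fun w => X i w == f i).

Definition two_wise_hash (Omega : finType) (p : Omega -> R) (n t : nat)
  (h : Omega -> {ffun 'I_n -> 'I_t}) : Prop :=
  (forall k j, Pr p (fun w => h w k == j) = (t%:R)^-1) /\
  (forall k1 k2 j1 j2, k1 != k2 ->
     Pr p (fun w => (h w k1 == j1) && (h w k2 == j2))
     = Pr p (fun w => h w k1 == j1) * Pr p (fun w => h w k2 == j2)).

(* sigma : [n] -> {-1,1} (true = +1, false = -1) is 4-wise independent with
   uniform values: any at most four values are independent and uniform. *)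
Definition four_wise_sign (Omega : finType) (p : Omega -> R) (n : nat)
  (s : Omega -> {ffun 'I_n -> bool}) : Prop :=
  forall (K : {set 'I_n}) (b : 'I_n -> bool), leq #|K| 4 ->
    Pr p (fun w => [forall k in K, s w k == b k]) = (2%:R^-1) ^+ #|K|.

Definition sgn (b : bool) : R := if b then 1 else -1.

Definition countsketch (n t : nat) (h : {ffun 'I_n -> 'I_t})
  (s : {ffun 'I_n -> bool}) : 'M[R]_(t, n) :=
  \matrix_(k < t, j < n) (if h j == k then sgn (s j) else 0).

Definition countsketch_family (Omega : finType) (p : Omega -> R)
  (tau n t : nat) (h : 'I_tau -> Omega -> {ffun 'I_n -> 'I_t})
  (s : 'I_tau -> Omega -> {ffun 'I_n -> bool}) : Prop :=
  mutually_indep p (fun i w => (h i w, s i w)) /\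
  (forall i, two_wise_hash p (h i)) /\
  (forall i, four_wise_sign p (s i)) /\
  (forall i, indep2 p (h i) (s i)).

Definition sqnorm (k : nat) (v : 'cV[R]_k) : R := \sum_(i < k) (v i 0) ^+ 2.

(* Main.v *)
Require Import Defs.
From HB Require Import structures.
From mathcomp Require Import all_boot all_order all_algebra.
From mathcomp Require Import reals Rstruct.
From Stdlib Require Import Rdefinitions.
From mathcomp Require Import ring lra.
Set Implicit Arguments. Unset Strict Implicit. Unset Printing Implicit Defensive.
Import Order.TTheory GRing.Theory Num.Theory.
Local Open Scope ring_scope.

Definition Ex (A : finType) (q : A -> R) (F : A -> R) := \sum_(a : A) F a * q a.

Lemma Ex_ext (A : finType) (q : A -> R) F G : (forall a, F a = G a) -> Ex q F = Ex q G.
Proof. by move=> e; apply: eq_bigr => a _; rewrite e. Qed.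

Lemma ExD (A : finType) (q : A -> R) F G :
  Ex q (fun a => F a + G a) = Ex q F + Ex q G.
Proof. by rewrite /Ex -big_split; apply: eq_bigr => a _; rewrite mulrDl. Qed.

Lemma ExZ (A : finType) (q : A -> R) c F :
  Ex q (fun a => c * F a) = c * Ex q F.
Proof. by rewrite /Ex mulr_sumr; apply: eq_bigr => a _; rewrite mulrA. Qed.

Lemma ExN (A : finType) (q : A -> R) F :
  Ex q (fun a => - F a) = - Ex q F.
Proof. by rewrite /Ex -sumrN; apply: eq_bigr => a _; rewrite mulNr. Qed.

Lemma ExB (A : finType) (q : A -> R) F G :
  Ex q (fun a => F a - G a) = Ex q F - Ex q G.
Proof. by rewrite ExD ExN. Qed.

Lemma Ex_sum (A I : finType) (q : A -> R) (P : pred I) (F : I -> A -> R) :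
  Ex q (fun a => \sum_(i | P i) F i a) = \sum_(i | P i) Ex q (F i).
Proof.
rewrite /Ex (exchange_big); apply: eq_bigr => a _ /=.
by rewrite mulr_suml.
Qed.

Lemma Ex_const (A : finType) (q : A -> R) c :
  Ex q (fun _ => c) = c * \sum_a q a.
Proof. by rewrite /Ex mulr_sumr. Qed.

Lemma Ex_le (A : finType) (q : A -> R) F G :
  (forall a, 0 <= q a) -> (forall a, F a <= G a) -> Ex q F <= Ex q G.
Proof.
move=> q0 FG; rewrite /Ex; apply: ler_sum => a _.
by apply: ler_wpM2r.
Qed.

Lemma Ex_ge0 (A : finType) (q : A -> R) F :
  (forall a, 0 <= q a) -> (forall a, 0 <= F a) -> 0 <= Ex q F.
Proof.
move=> q0 F0; rewrite /Ex; apply: sumr_ge0 => a _; exact: mulr_ge0.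
Qed.

Lemma Ex_group (Om A : finType) (p : Om -> R) (Y : Om -> A) (Phi : A -> R) :
  Ex p (fun w => Phi (Y w)) = Ex (fun a => Pr p (fun w => Y w == a)) Phi.
Proof.
rewrite /Ex /Pr (partition_big Y predT) //=.
apply: eq_bigr => a _; rewrite mulr_sumr; apply: eq_bigr => w /eqP <-.
by rewrite mulrC.
Qed.

Lemma sum_Pr (Om A : finType) (p : Om -> R) (Y : Om -> A) :
  \sum_a Pr p (fun w => Y w == a) = \sum_w p w.
Proof.
by rewrite /Pr [RHS](partition_big Y predT).
Qed.

Lemma Ex_ind (Om : finType) (p : Om -> R) (E : Om -> bool) :
  Ex p (fun w => (E w)%:R) = Pr p E.
Proof.
rewrite /Ex /Pr [RHS]big_mkcond /=; apply: eq_bigr => w _.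
by case: (E w); rewrite ?mul1r ?mul0r.
Qed.

Lemma Pr_ge0 (Om : finType) (p : Om -> R) E : (forall w, 0 <= p w) -> 0 <= Pr p E.
Proof. by move=> p0; apply: sumr_ge0. Qed.

Lemma Ex_indep2 (Om A B : finType) (p : Om -> R) (X : Om -> A) (Y : Om -> B)
  (F : A -> R) (G : B -> R) : indep2 p X Y ->
  Ex p (fun w => F (X w) * G (Y w)) = Ex p (fun w => F (X w)) * Ex p (fun w => G (Y w)).
Proof.
move=> ind.
rewrite (Ex_group p (fun w => (X w, Y w)) (fun ab => F ab.1 * G ab.2)).
rewrite (Ex_group p X F) (Ex_group p Y G) /Ex.
rewrite -(pair_bigA _ (fun a b => F a * G b * Pr p (fun w => (X w, Y w) == (a,b)))) /= mulr_suml; apply: eq_bigr => a _.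
rewrite mulr_sumr; apply: eq_bigr => b _.
have -> : Pr p (fun w => (X w, Y w) == (a, b)) =
   Pr p (fun w => (X w == a) && (Y w == b)).
  by apply: eq_bigl => w; rewrite xpair_eqE.
rewrite ind /=. by rewrite mulrACA.
Qed.


Lemma sgn_sq b : sgn b * sgn b = 1.
Proof. by case: b; rewrite /sgn ?mulr1 ?mulrNN ?mulr1. Qed.

Lemma sum_sgn : \sum_(x : bool) sgn x = 0.
Proof. by rewrite big_bool /sgn /= addrN. Qed.

Section Signs.
Variables (Om : finType) (p : Om -> R) (n : nat) (S : Om -> {ffun 'I_n -> bool}).
Hypothesis Hs : four_wise_sign p S.

Lemma prod_sgn_decomp (K : {set 'I_n}) (w : Om) :
  \prod_(j in K) sgn (S w j) =
  \sum_(b in pfamily false (fun j => j \in K) (fun _ => predT))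
     ([forall k in K, S w k == b k])%:R * \prod_(j in K) sgn (b j).
Proof.
pose b0 := [ffun k => (k \in K) && S w k].
have b0P : b0 \in pfamily false (fun j => j \in K) (fun _ => predT).
  apply/pfamilyP; split=> //; apply/subsetP => k; rewrite !inE ffunE.
  by case: (k \in K).
rewrite [RHS](bigD1 b0) //= [X in _ = _ + X]big1 ?addr0.
  have -> : [forall k in K, S w k == b0 k].
    by apply/forall_inP => k kK; rewrite ffunE kK.
  rewrite mul1r; apply: eq_bigr => j jK; by rewrite ffunE jK.
move=> b /andP [/pfamilyP [supp _] nb].
case: (boolP [forall k in K, S w k == b k]) => [/forall_inP H|]; last by rewrite mul0r.
exfalso; move/negP: nb; apply; apply/eqP/ffunP => k; rewrite ffunE.
case: (boolP (k \in K)) => kK /=.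
  by rewrite (eqP (H k kK)).
move/subsetP: supp => /(_ k); rewrite !inE.
by case: (b k) => // /(_ isT); rewrite (negbTE kK).
Qed.

Lemma sign_set0 (K : {set 'I_n}) : (leq #|K| 4) -> K != set0 ->
  Ex p (fun w => \prod_(j in K) sgn (S w j)) = 0.
Proof.
move=> cK nK.
rewrite (Ex_ext _ (fun w => prod_sgn_decomp K w)) Ex_sum.
rewrite (eq_bigr (fun b : {ffun 'I_n -> bool} => ((2%:R^-1) ^+ #|K|) * \prod_(j in K) sgn (b j))); last first.
  move=> b _; rewrite (Ex_ext _ (fun w => mulrC _ _)) ExZ Ex_ind.
  by rewrite (Hs b cK) mulrC.
rewrite -mulr_sumr.
have := big_distr_big_dep false (fun j => j \in K) (fun _ _ => true)
   (fun (_ : 'I_n) (x : bool) => sgn x).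
rewrite -/(GRing.mul) => <-.
case/set0Pn: nK => j jK.
rewrite (bigD1 j) //=.
have -> : \sum_(x | true) sgn x = 0 by exact: sum_sgn.
by rewrite !mul0r mulr0.
Qed.

End Signs.


Lemma Ex1 (A : finType) (q : A -> R) : is_pmf q -> Ex q (fun _ => 1) = 1.
Proof. by case=> _ s1; rewrite Ex_const s1 mul1r. Qed.

Lemma sqL1 (a b c : R) : a * a = 1 -> a * b * a * c = b * c.
Proof. move=> e; have -> : a * b * a * c = (a * a) * (b * c) by ring. by rewrite e mul1r. Qed.
Lemma sqL2 (a b c : R) : a * a = 1 -> a * b * c * a = b * c.
Proof. move=> e; have -> : a * b * c * a = (a * a) * (b * c) by ring. by rewrite e mul1r. Qed.
Lemma sqL3 (a b c : R) : b * b = 1 -> a * b * b * c = a * c.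
Proof. move=> e; have -> : a * b * b * c = (b * b) * (a * c) by ring. by rewrite e mul1r. Qed.
Lemma sqL4 (a b c : R) : b * b = 1 -> a * b * c * b = a * c.
Proof. move=> e; have -> : a * b * c * b = (b * b) * (a * c) by ring. by rewrite e mul1r. Qed.

Section Signs2.
Variables (Om : finType) (p : Om -> R) (n : nat) (S : Om -> {ffun 'I_n -> bool}).
Hypothesis Hp : is_pmf p.
Hypothesis Hs : four_wise_sign p S.

Lemma sgn_E1 j : Ex p (fun w => sgn (S w j)) = 0.
Proof.
rewrite -(sign_set0 Hs (K := [set j])) ?cards1 //; last by apply/set0Pn; exists j; rewrite inE.
by apply: Ex_ext => w; rewrite big_set1.
Qed.

Lemma sgn_E2 j j' : Ex p (fun w => sgn (S w j) * sgn (S w j')) = (j == j')%:R.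
Proof.
case: eqVneq => [<-|ne].
  by rewrite (Ex_ext _ (fun w => sgn_sq _)) Ex1.
rewrite (_ : false%:R = 0) // -(sign_set0 Hs (K := j |: [set j'])).
- apply: Ex_ext => w; rewrite big_setU1 ?big_set1 // inE; exact: ne.
- by rewrite cardsU1 cards1; case: (_ \notin _).
- by apply/set0Pn; exists j; rewrite !inE eqxx.
Qed.

Lemma sgn_E4dist j1 j2 j3 j4 : j1 != j2 -> j1 != j3 -> j1 != j4 ->
  j2 != j3 -> j2 != j4 -> j3 != j4 ->
  Ex p (fun w => sgn (S w j1) * sgn (S w j2) * sgn (S w j3) * sgn (S w j4)) = 0.
Proof.
move=> n12 n13 n14 n23 n24 n34.
rewrite -(sign_set0 Hs (K := j1 |: (j2 |: (j3 |: [set j4])))).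
- apply: Ex_ext => w.
  rewrite big_setU1; last by rewrite !inE (negbTE n12) (negbTE n13) (negbTE n14).
  rewrite big_setU1; last by rewrite !inE (negbTE n23) (negbTE n24).
  rewrite big_setU1; last by rewrite !inE n34.
  by rewrite big_set1 /= !mulrA.
- rewrite !cardsU1 cards1.
  by case: (_ \notin _); case: (_ \notin _); case: (_ \notin _).
- by apply/set0Pn; exists j1; rewrite !inE eqxx.
Qed.

Lemma sgn_E4 j1 j2 j3 j4 : j1 != j2 -> j3 != j4 ->
  Ex p (fun w => sgn (S w j1) * sgn (S w j2) * sgn (S w j3) * sgn (S w j4)) =
  ((j1 == j3) && (j2 == j4))%:R + ((j1 == j4) && (j2 == j3))%:R.
Proof.
move=> n12 n34.
case: (eqVneq j1 j3) => [e13|n13].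
  subst j3; rewrite [j2 == j1]eq_sym (negbTE n12) andbF addr0 /=.
  rewrite -sgn_E2; apply: Ex_ext => w; exact: sqL1 (sgn_sq _).
case: (eqVneq j1 j4) => [e14|n14].
  subst j4; rewrite /= add0r.
  rewrite -sgn_E2; apply: Ex_ext => w; exact: sqL2 (sgn_sq _).
rewrite /= add0r.
case: (eqVneq j2 j3) => [e23|n23].
  subst j3; rewrite (_ : false%:R = 0) //.
  transitivity (Ex p (fun w => sgn (S w j1) * sgn (S w j4))); last by rewrite sgn_E2 (negbTE n14).
  apply: Ex_ext => w; exact: sqL3 (sgn_sq _).
case: (eqVneq j2 j4) => [e24|n24].
  subst j4; transitivity (Ex p (fun w => sgn (S w j1) * sgn (S w j3))); last by rewrite sgn_E2 (negbTE n13).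
  apply: Ex_ext => w; exact: sqL4 (sgn_sq _).
by rewrite sgn_E4dist.
Qed.

End Signs2.


Lemma sum_ind_r (I : finType) (F : I -> R) j : \sum_i F i * (i == j)%:R = F j.
Proof.
rewrite (bigD1 j) //= big1 ?eqxx ?mulr1 ?addr0 // => i /negbTE ->; by rewrite mulr0.
Qed.

Lemma ind_sq (b : bool) : (b%:R : R) * b%:R = b%:R.
Proof. by case: b; rewrite ?mulr1 ?mulr0. Qed.

Lemma indM (b c : bool) : (b%:R : R) * c%:R = (b && c)%:R.
Proof. by case: b; case: c; rewrite ?mulr1 ?mulr0 ?mul0r. Qed.

Definition Uv (n t : nat) (x : {ffun 'I_n -> 'I_t} * {ffun 'I_n -> bool}) (a : 'cV[R]_n)
  : 'cV[R]_t := countsketch x.1 x.2 *m a.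

Lemma Uv_expand n t x (a : 'cV[R]_n) (k : 'I_t) :
  (Uv x a) k 0 = \sum_j (x.1 j == k)%:R * sgn (x.2 j) * a j 0.
Proof.
rewrite /Uv /countsketch mxE; apply: eq_bigr => j _; rewrite mxE.
by case: (x.1 j == k); rewrite ?mul1r ?mul0r.
Qed.

Lemma sum_ind2 (I : finType) (u v : I) :
  \sum_k (u == k)%:R * (v == k)%:R = (u == v)%:R :> R.
Proof.
rewrite (bigD1 u) //= eqxx mul1r big1 ?addr0; first by rewrite eq_sym.
by move=> k nk; rewrite eq_sym (negbTE nk) mul0r.
Qed.

Lemma sum2_ind (I : finType) (F : I -> I -> R) (u v : I) :
  \sum_i \sum_j F i j * ((i == u) && (j == v))%:R = F u v.
Proof.
rewrite (eq_bigr (fun i => F i v * (i == u)%:R)) ?sum_ind_r // => i _.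
rewrite (eq_bigr (fun j => (F i j * (i == u)%:R) * (j == v)%:R)) ?sum_ind_r // => j _.
by rewrite -indM mulrA.
Qed.

Lemma ind_true : true%:R = 1 :> R. Proof. by []. Qed.
Lemma ind_false : false%:R = 0 :> R. Proof. by []. Qed.

Lemma sqL5 (a b c : R) : c * c = 1 -> a * b * c * c = a * b.
Proof. move=> e; by rewrite -mulrA e mulr1. Qed.

Section Sketch.
Variables (Om : finType) (p : Om -> R) (n t : nat).
Variables (H : Om -> {ffun 'I_n -> 'I_t}) (S : Om -> {ffun 'I_n -> bool}).
Hypothesis Hp : is_pmf p.
Hypothesis Hh : two_wise_hash p H.
Hypothesis Hs : four_wise_sign p S.
Hypothesis Hind : indep2 p H S.
Hypothesis tpos : leq 1 t.

Lemma hE1 j k : Ex p (fun w => (H w j == k)%:R) = t%:R^-1.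
Proof. by rewrite Ex_ind (Hh.1 j k). Qed.

Lemma hE2 j k k' : Ex p (fun w => (H w j == k)%:R * (H w j == k')%:R) = (k == k')%:R / t%:R.
Proof.
case: (eqVneq k k') => [<-|ne].
  by rewrite (Ex_ext _ (fun w => ind_sq _)) hE1 mul1r.
rewrite mul0r (Ex_ext _ (G := fun _ => 0)) ?Ex_const ?mul0r // => w.
case: (eqVneq (H w j) k) => [->|n1]; last by rewrite mul0r.
by rewrite (negbTE ne) mulr0.
Qed.

Lemma hEpair j j' : j != j' -> Ex p (fun w => (H w j == H w j')%:R) = t%:R^-1.
Proof.
move=> ne.
have e : forall w, ((H w j == H w j')%:R : R) =
   \sum_k (H w j == k)%:R * (H w j' == k)%:R.
  move=> w; rewrite (bigD1 (H w j)) //= eqxx mul1r big1 ?addr0; first by rewrite eq_sym.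
  by move=> k nk; rewrite eq_sym (negbTE nk) mul0r.
rewrite (Ex_ext _ e) Ex_sum.
rewrite (eq_bigr (fun _ => t%:R^-1 * t%:R^-1)); last first.
  move=> k _; rewrite (Ex_ext _ (fun w => indM _ _)) Ex_ind (Hh.2 j j' k k ne) /=.
  by rewrite (Hh.1 j k) (Hh.1 j' k).
have tn : (t%:R : R) != 0 by rewrite pnatr_eq0 -lt0n.
rewrite sumr_const card_ord -(mulr_natr (t%:R^-1 * t%:R^-1) t).
by rewrite -mulrA mulVf // mulr1.
Qed.

Variable a : 'cV[R]_n.

Lemma EU k : Ex p (fun w => (Uv (H w, S w) a) k 0) = 0.
Proof.
rewrite (Ex_ext _ (fun w => Uv_expand _ _ _)) Ex_sum big1 // => j _ /=.
rewrite (@Ex_ext _ p _ (fun w => a j 0 * ((fun h : {ffun 'I_n -> 'I_t} => (h j == k)%:R) (H w)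
     * (fun s : {ffun 'I_n -> bool} => sgn (s j)) (S w)))); last by move=> w /=; ring.
by rewrite ExZ (Ex_indep2 (fun h : {ffun 'I_n -> 'I_t} => (h j == k)%:R)
   (fun s : {ffun 'I_n -> bool} => sgn (s j)) Hind) /= (sgn_E1 Hs) !mulr0.
Qed.

Lemma EUU k k' : Ex p (fun w => (Uv (H w, S w) a) k 0 * (Uv (H w, S w) a) k' 0)
   = (k == k')%:R * sqnorm a / t%:R.
Proof.
rewrite (@Ex_ext _ p _ (fun w => \sum_j1 \sum_j2 (a j1 0 * a j2 0) *
   ((fun h : {ffun 'I_n -> 'I_t} => (h j1 == k)%:R * (h j2 == k')%:R) (H w) *
    (fun s : {ffun 'I_n -> bool} => sgn (s j1) * sgn (s j2)) (S w)))); last first.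
  move=> w; rewrite !Uv_expand big_distrlr /=; apply: eq_bigr => j1 _.
  by apply: eq_bigr => j2 _; ring.
rewrite Ex_sum (eq_bigr (fun j1 => a j1 0 * a j1 0 * ((k == k')%:R / t%:R))); last first.
  move=> j1 _; rewrite Ex_sum.
  rewrite (eq_bigr (fun j2 => (a j1 0 * a j2 0 * Ex p (fun w => (H w j1 == k)%:R * (H w j2 == k')%:R))
       * (j2 == j1)%:R)); last first.
    move=> j2 _; rewrite ExZ (Ex_indep2 (fun h : {ffun 'I_n -> 'I_t} => (h j1 == k)%:R * (h j2 == k')%:R)
   (fun s : {ffun 'I_n -> bool} => sgn (s j1) * sgn (s j2)) Hind) /= (sgn_E2 Hp Hs) eq_sym.
    by rewrite mulrA.
  by rewrite sum_ind_r hE2.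
rewrite /sqnorm -mulr_suml mulrA [_ * (k == k')%:R]mulrC.
by congr (_ * _ * _); apply: eq_bigr => i _; rewrite expr2.
Qed.

Lemma ED : Ex p (fun w => sqnorm (Uv (H w, S w) a) - sqnorm a) = 0.
Proof.
rewrite ExB (Ex_const p (sqnorm a)) Hp.2 mulr1 /sqnorm.
rewrite (@Ex_ext _ p _ (fun w => \sum_k (Uv (H w, S w) a) k 0 * (Uv (H w, S w) a) k 0)); last first.
  by move=> w; apply: eq_bigr => k _; rewrite expr2.
rewrite Ex_sum (eq_bigr (fun _ => sqnorm a / t%:R)); last first.
  by move=> k _; rewrite EUU eqxx mul1r.
have tn : (t%:R : R) != 0 by rewrite pnatr_eq0 -lt0n.
rewrite sumr_const card_ord -(mulr_natr (sqnorm a / t%:R) t) -mulrA mulVf // mulr1.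
by rewrite /sqnorm subrr.
Qed.

Lemma sgn_E4' j1 j2 j3 j4 : j1 != j2 ->
  Ex p (fun w => sgn (S w j1) * sgn (S w j2) * sgn (S w j3) * sgn (S w j4)) =
  ((j1 == j3) && (j2 == j4))%:R + ((j1 == j4) && (j2 == j3))%:R.
Proof.
move=> n12; case: (eqVneq j3 j4) => [e34|n34]; last exact: sgn_E4.
subst j4.
have nb : ~~ ((j1 == j3) && (j2 == j3)).
  apply/andP => [[/eqP e1 /eqP e2]]; by move: n12; rewrite e1 e2 eqxx.
rewrite (negbTE nb) (_ : false%:R = 0) // addr0.
rewrite (Ex_ext _ (fun w => sqL5 (sgn (S w j1)) (sgn (S w j2)) (sgn_sq (S w j3)))).
by rewrite (sgn_E2 Hp Hs) (negbTE n12).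
Qed.

Definition cD w (j1 j2 : 'I_n) := (j1 != j2)%:R * (a j1 0 * a j2 0) *
  ((H w j1 == H w j2)%:R * (sgn (S w j1) * sgn (S w j2))).

Lemma D_expand w : sqnorm (Uv (H w, S w) a) - sqnorm a = \sum_j1 \sum_j2 cD w j1 j2.
Proof.
have e1 : sqnorm (Uv (H w, S w) a) = \sum_j1 \sum_j2 (a j1 0 * a j2 0) *
   ((H w j1 == H w j2)%:R * (sgn (S w j1) * sgn (S w j2))).
  rewrite /sqnorm.
  under eq_bigr => k _ do rewrite expr2 Uv_expand big_distrlr /=.
  rewrite exchange_big /=; apply: eq_bigr => j1 _.
  rewrite exchange_big /=; apply: eq_bigr => j2 _.
  rewrite -(sum_ind2 (H w j1)) mulr_suml mulr_sumr; apply: eq_bigr => k _; ring.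
have e2 : sqnorm a = \sum_j1 \sum_j2 (j1 == j2)%:R * ((a j1 0 * a j2 0) *
   ((H w j1 == H w j2)%:R * (sgn (S w j1) * sgn (S w j2)))).
  rewrite /sqnorm; apply: eq_bigr => j1 _.
  rewrite (eq_bigr (fun j2 => ((a j1 0 * a j2 0) *
   ((H w j1 == H w j2)%:R * (sgn (S w j1) * sgn (S w j2)))) * (j2 == j1)%:R)); last first.
    by move=> j2 _; rewrite [LHS]mulrC [j1 == j2]eq_sym.
  by rewrite sum_ind_r eqxx ind_true mul1r sgn_sq mulr1 expr2.
rewrite e1 e2 -sumrB; apply: eq_bigr => j1 _; rewrite -sumrB; apply: eq_bigr => j2 _.
rewrite /cD; case: (j1 == j2) => /=; ring.
Qed.

Lemma hsq j1 j2 : j1 != j2 ->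
  Ex p (fun w => (H w j1 == H w j2)%:R * (H w j1 == H w j2)%:R) = t%:R^-1.
Proof. by move=> ne; rewrite (Ex_ext _ (fun w => ind_sq _)) (hEpair ne). Qed.

Lemma hsq' j1 j2 : j1 != j2 ->
  Ex p (fun w => (H w j1 == H w j2)%:R * (H w j2 == H w j1)%:R) = t%:R^-1.
Proof.
move=> ne; rewrite -(hsq ne); apply: Ex_ext => w; by rewrite [H w j2 == _]eq_sym.
Qed.

Lemma inner_sum j1 j2 :
  \sum_j3 \sum_j4 Ex p (fun w => cD w j1 j2 * cD w j3 j4) =
  (j1 != j2)%:R * (2 * (a j1 0 ^+ 2 * a j2 0 ^+ 2) / t%:R).
Proof.
case: (eqVneq j1 j2) => [e12|n12].
  rewrite /= mul0r big1 // => j3 _; rewrite big1 // => j4 _.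
  rewrite (Ex_ext _ (G := fun _ => 0)) ?Ex_const ?mul0r // => w.
  by rewrite /cD e12 eqxx /= !mul0r.
rewrite /= mul1r.
rewrite (eq_bigr (fun j3 => \sum_j4 (
   (a j1 0 * a j2 0 * a j3 0 * a j4 0 *
     Ex p (fun w => (H w j1 == H w j2)%:R * (H w j3 == H w j4)%:R)) *
   ((j3 == j1) && (j4 == j2))%:R +
   (a j1 0 * a j2 0 * a j3 0 * a j4 0 *
     Ex p (fun w => (H w j1 == H w j2)%:R * (H w j3 == H w j4)%:R)) *
   ((j3 == j2) && (j4 == j1))%:R))); last first.
  move=> j3 _; apply: eq_bigr => j4 _.
  case: (eqVneq j3 j4) => [e34|n34].
    subst j4; rewrite (Ex_ext _ (G := fun _ => 0)); last first.
      by move=> w; rewrite /cD eqxx /= !mul0r mulr0.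
    rewrite Ex_const mul0r.
    have nb1 : ~~ ((j3 == j1) && (j3 == j2)).
      apply/andP => [[/eqP e1 /eqP e2]]; by move: n12; rewrite -e1 -e2 eqxx.
    have nb2 : ~~ ((j3 == j2) && (j3 == j1)) by rewrite andbC.
    by rewrite (negbTE nb1) (negbTE nb2) !mulr0 addr0.
  rewrite (@Ex_ext _ p _ (fun w => (a j1 0 * a j2 0 * a j3 0 * a j4 0) *
     ((fun h : {ffun 'I_n -> 'I_t} => (h j1 == h j2)%:R * (h j3 == h j4)%:R) (H w) *
      (fun s : {ffun 'I_n -> bool} => sgn (s j1) * sgn (s j2) * sgn (s j3) * sgn (s j4)) (S w))));
   last by move=> w; rewrite /cD n12 n34 /=; ring.
  rewrite ExZ (Ex_indep2 (fun h : {ffun 'I_n -> 'I_t} => (h j1 == h j2)%:R * (h j3 == h j4)%:R)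
      (fun s : {ffun 'I_n -> bool} => sgn (s j1) * sgn (s j2) * sgn (s j3) * sgn (s j4)) Hind) /=.
  rewrite (sgn_E4' _ _ n12) [j1 == j3]eq_sym [j2 == j4]eq_sym [j1 == j4]eq_sym [j2 == j3]eq_sym.
  rewrite [(j4 == j1) && _]andbC; ring.
rewrite (eq_bigr (fun j3 => \sum_j4 (a j1 0 * a j2 0 * a j3 0 * a j4 0 *
     Ex p (fun w => (H w j1 == H w j2)%:R * (H w j3 == H w j4)%:R)) *
   ((j3 == j1) && (j4 == j2))%:R +
   \sum_j4 (a j1 0 * a j2 0 * a j3 0 * a j4 0 *
     Ex p (fun w => (H w j1 == H w j2)%:R * (H w j3 == H w j4)%:R)) *
   ((j3 == j2) && (j4 == j1))%:R)); last by move=> j3 _; rewrite big_split.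
rewrite big_split /=.
rewrite (sum2_ind (fun j3 j4 => a j1 0 * a j2 0 * a j3 0 * a j4 0 *
     Ex p (fun w => (H w j1 == H w j2)%:R * (H w j3 == H w j4)%:R))).
rewrite (sum2_ind (fun j3 j4 => a j1 0 * a j2 0 * a j3 0 * a j4 0 *
     Ex p (fun w => (H w j1 == H w j2)%:R * (H w j3 == H w j4)%:R))).
rewrite (hsq n12) (hsq' n12); ring.
Qed.

Lemma ED2 : Ex p (fun w => (sqnorm (Uv (H w, S w) a) - sqnorm a) ^+ 2)
   <= 2 * sqnorm a ^+ 2 / t%:R.
Proof.
rewrite (@Ex_ext _ p _ (fun w => \sum_j1 \sum_j3 \sum_j2 \sum_j4 cD w j1 j2 * cD w j3 j4));
  last first.
  move=> w; rewrite expr2 D_expand big_distrlr /=; apply: eq_bigr => j1 _.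
  apply: eq_bigr => j3 _; by rewrite big_distrlr.
rewrite Ex_sum.
rewrite (eq_bigr (fun j1 => \sum_j2 (j1 != j2)%:R * (2 * (a j1 0 ^+ 2 * a j2 0 ^+ 2) / t%:R)));
  last first.
  move=> j1 _; rewrite Ex_sum; under eq_bigr => j3 _ do rewrite Ex_sum.
  rewrite exchange_big /=; apply: eq_bigr => j2 _.
  rewrite -inner_sum; apply: eq_bigr => j3 _; by rewrite Ex_sum.
rewrite /sqnorm expr2 big_distrlr /= mulr_sumr mulr_suml; apply: ler_sum => j1 _.
rewrite mulr_sumr mulr_suml; apply: ler_sum => j2 _.
have t0 : 0 <= (t%:R : R)^-1 by rewrite invr_ge0 ler0n.
have X0 : 0 <= 2 * (a j1 0 ^+ 2 * a j2 0 ^+ 2) / t%:R.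
  by apply: mulr_ge0 => //; apply: mulr_ge0 => //; apply: mulr_ge0; apply: sqr_ge0.
case: (j1 != j2) => /=; first by rewrite mul1r.
by rewrite mul0r.
Qed.

End Sketch.


Lemma Ex_ext_q (A : finType) (q q' : A -> R) F : (forall a, q a = q' a) -> Ex q F = Ex q' F.
Proof. by move=> e; apply: eq_bigr => a _; rewrite e. Qed.

Definition upd (I T : finType) (f : {ffun I -> T}) (i : I) (x : T) : {ffun I -> T} :=
  [ffun j => if j == i then x else f j].

Lemma upd_same (I T : finType) (f : {ffun I -> T}) i x : upd f i x i = x.
Proof. by rewrite ffunE eqxx. Qed.

Lemma upd_other (I T : finType) (f : {ffun I -> T}) i x j : j != i -> upd f i x j = f j.
Proof. by move=> ne; rewrite ffunE (negbTE ne). Qed.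

Lemma upd_upd (I T : finType) (f : {ffun I -> T}) i x y : upd (upd f i x) i y = upd f i y.
Proof. apply/ffunP => j; rewrite !ffunE; by case: (j == i). Qed.

Lemma upd_id (I T : finType) (f : {ffun I -> T}) i y : (upd f i y == f) = (f i == y).
Proof.
apply/eqP/eqP => [<-|e]; first by rewrite upd_same.
apply/ffunP => j; rewrite ffunE; case: eqP => [->|] //.
Qed.

Lemma sum_fiber_const (I T : finType) (rho : {ffun I -> T} -> R) i x y :
  (forall f z, rho (upd f i z) = rho f) ->
  \sum_(f : {ffun I -> T} | f i == x) rho f = \sum_(f : {ffun I -> T} | f i == y) rho f.
Proof.
move=> inv.
rewrite (reindex_onto (fun g => upd g i x) (fun f => upd f i y)); last first.
  by move=> f /eqP fx; rewrite upd_upd -fx; apply/eqP; rewrite upd_id.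
apply: eq_big => g; first by rewrite upd_same eqxx upd_upd upd_id.
by move=> _; rewrite inv.
Qed.

Section Prod.
Variables (Om : finType) (p : Om -> R) (tau : nat) (T : finType).
Variable X : 'I_tau -> Om -> T.
Hypothesis Hp : is_pmf p.
Hypothesis Hmi : mutually_indep p X.

Definition Pm i x := Pr p (fun w => X i w == x).
Definition mu (f : {ffun 'I_tau -> T}) := \prod_i Pm i (f i).

Lemma E_Y (Phi : {ffun 'I_tau -> T} -> R) :
  Ex p (fun w => Phi [ffun i => X i w]) = Ex mu Phi.
Proof.
rewrite (Ex_group p (fun w => [ffun i => X i w]) Phi).
apply: Ex_ext_q => f; rewrite /mu -Hmi; apply: eq_bigl => w.
apply/eqP/forallP => [<- i|H]; first by rewrite ffunE.
apply/ffunP => i; rewrite ffunE; exact/eqP.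
Qed.

Lemma Pm_ge0 i x : 0 <= Pm i x.
Proof. apply: sumr_ge0 => w _; exact: Hp.1. Qed.

Lemma mu_ge0 f : 0 <= mu f.
Proof. apply: prodr_ge0 => i _; exact: Pm_ge0. Qed.

Lemma sum_Pm i : \sum_x Pm i x = 1.
Proof. by rewrite /Pm sum_Pr Hp.2. Qed.

Lemma Ex_mu1 : Ex mu (fun _ => 1) = 1.
Proof. by rewrite -(E_Y (fun _ => 1)) Ex1. Qed.

Lemma Pm_E i (G : T -> R) : Ex (Pm i) G = Ex p (fun w => G (X i w)).
Proof. by rewrite (Ex_group p (X i) G). Qed.

Lemma split_indep i0 (F : {ffun 'I_tau -> T} -> R) (G : T -> R) :
  (forall f x, F (upd f i0 x) = F f) ->
  Ex mu (fun f => F f * G (f i0)) = Ex mu F * Ex (Pm i0) G.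
Proof.
move=> inv.
have [w0 _] : exists w0 : Om, true.
  case: (pickP (fun _ : Om => true)) => [w0 _|e]; first by exists w0.
  move: Hp.2; rewrite big_pred0 // => /eqP; by rewrite eq_sym oner_eq0.
pose x0 := X i0 w0.
pose rho f := F f * \prod_(j | j != i0) Pm j (f j).
have rinv : forall f z, rho (upd f i0 z) = rho f.
  move=> f z; rewrite /rho inv; congr (_ * _); apply: eq_bigr => j nj.
  by rewrite upd_other.
have key : forall phi : T -> R,
  \sum_(f : {ffun 'I_tau -> T}) phi (f i0) * rho f =
    (\sum_x phi x) * \sum_(f : {ffun 'I_tau -> T} | f i0 == x0) rho f.
  move=> phi; rewrite (partition_big (fun f : {ffun 'I_tau -> T} => f i0) predT) //=.
  rewrite mulr_suml; apply: eq_bigr => x _.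
  rewrite -(@sum_fiber_const _ _ rho i0 x x0 rinv) mulr_sumr; apply: eq_bigr => f /eqP <-.
  by [].
have muE : forall f, mu f = Pm i0 (f i0) * \prod_(j | j != i0) Pm j (f j).
  by move=> f; rewrite /mu (bigD1 i0).
have e1 : Ex mu (fun f => F f * G (f i0)) = \sum_(f : {ffun 'I_tau -> T}) (G (f i0) * Pm i0 (f i0)) * rho f.
  apply: eq_bigr => f _; rewrite muE /rho; ring.
have e2 : Ex mu F = \sum_(f : {ffun 'I_tau -> T}) (Pm i0 (f i0)) * rho f.
  apply: eq_bigr => f _; rewrite muE /rho; ring.
rewrite e1 e2 (key (fun x => G x * Pm i0 x)) (key (Pm i0)) sum_Pm mul1r mulrC.
by [].
Qed.

Lemma Ex_mu_coord i0 (G : T -> R) : Ex mu (fun f => G (f i0)) = Ex (Pm i0) G.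
Proof.
have := @split_indep i0 (fun _ => 1) G (fun _ _ => erefl).
rewrite Ex_mu1 mul1r => <-; apply: Ex_ext => f; by rewrite mul1r.
Qed.

End Prod.


Lemma sqnormD k (u v : 'cV[R]_k) :
  sqnorm (u + v) = sqnorm u + 2 * (\sum_i u i 0 * v i 0) + sqnorm v.
Proof.
rewrite /sqnorm mulr_sumr -!big_split /=; apply: eq_bigr => i _; rewrite mxE; ring.
Qed.

Lemma sqnorm0 k : sqnorm (0 : 'cV[R]_k) = 0.
Proof. by rewrite /sqnorm big1 // => i _; rewrite mxE expr0n. Qed.

Lemma ltnS_neq (x m : nat) : (x < m.+1)%nat && (x != m) = (x < m)%nat.
Proof. by rewrite ltnS ltn_neqAle andbC. Qed.

Section Main.
Variables (Om : finType) (p : Om -> R) (tau n t : nat).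
Variables (h : 'I_tau -> Om -> {ffun 'I_n -> 'I_t}) (s : 'I_tau -> Om -> {ffun 'I_n -> bool}).
Hypothesis Hp : is_pmf p.
Hypothesis Hf : countsketch_family p h s.
Hypothesis tpos : leq 1 t.
Variable a : 'I_tau -> 'cV[R]_n.

Definition XX i w := (h i w, s i w).
Lemma Hmi : mutually_indep p XX.
Proof. exact: Hf.1. Qed.

Definition Zm m (f : {ffun 'I_tau -> ({ffun 'I_n -> 'I_t} * {ffun 'I_n -> bool})}) :=
  \sum_(i : 'I_tau | (i < m)%nat) Uv (f i) (a i).
Definition mum m := \sum_(i : 'I_tau | (i < m)%nat) sqnorm (a i).
Definition Vm m f := sqnorm (Zm m f) - mum m.

Lemma EZ m k : Ex (mu p XX) (fun f => Zm m f k 0) = 0.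
Proof.
rewrite (Ex_ext _ (fun f => summxE _ _ _ _ _)) Ex_sum big1 // => i _.
rewrite (Ex_mu_coord Hp Hmi i (fun x => (Uv x (a i)) k 0)) Pm_E /XX /=.
exact: EU (Hf.2.2.1 i) (Hf.2.2.2 i) (a i) k.
Qed.

Lemma Zinv m (i0 : 'I_tau) : val i0 = m -> forall f x, Zm m (upd f i0 x) = Zm m f.
Proof.
move=> e f x; apply: eq_bigr => i im; rewrite upd_other //.
apply/eqP => ei; move: im; by rewrite ei e ltnn.
Qed.

Lemma Zstep m (i0 : 'I_tau) f : val i0 = m -> Zm m.+1 f = Zm m f + Uv (f i0) (a i0).
Proof.
move=> e; rewrite /Zm (bigD1 i0) /=; last by rewrite e.
rewrite addrC; congr (_ + _); apply: eq_bigl => i.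
by rewrite -(inj_eq val_inj) /= e ltnS_neq.
Qed.

Lemma mustep m (i0 : 'I_tau) : val i0 = m -> mum m.+1 = mum m + sqnorm (a i0).
Proof.
move=> e; rewrite /mum (bigD1 i0) /=; last by rewrite e.
rewrite addrC; congr (_ + _); apply: eq_bigl => i.
by rewrite -(inj_eq val_inj) /= e ltnS_neq.
Qed.

Lemma Vinv m (i0 : 'I_tau) : val i0 = m -> forall f x, Vm m (upd f i0 x) = Vm m f.
Proof. by move=> e f x; rewrite /Vm (Zinv e). Qed.

Lemma Vmain m : (m <= tau)%nat ->
  Ex (mu p XX) (Vm m) = 0 /\ Ex (mu p XX) (fun f => Vm m f ^+ 2) <= 2 * mum m ^+ 2 / t%:R.
Proof.
elim: m => [_|m IH lt].
  have V0 : forall f, Vm 0 f = 0.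
    move=> f; rewrite /Vm /Zm /mum !big_pred0 // sqnorm0; exact: subrr.
  rewrite (Ex_ext _ V0) (@Ex_ext _ _ (fun f => Vm 0 f ^+ 2) (fun _ => 0)); last first.
    by move=> f; rewrite V0 expr0n.
  by rewrite Ex_const mul0r /mum big_pred0 // expr0n /= mulr0 mul0r.
have [IH1 IH2] := IH (ltnW lt).
have IH1' : Ex (mu p XX) (fun f => Vm m f) = 0 by [].
pose i0 := Ordinal lt.
have e0 : val i0 = m by [].
pose A := sqnorm (a i0).
pose Ug (x : ({ffun 'I_n -> 'I_t} * {ffun 'I_n -> bool})%type) (k : 'I_t) := (Uv x (a i0)) k 0.
pose Dg (x : ({ffun 'I_n -> 'I_t} * {ffun 'I_n -> bool})%type) := sqnorm (Uv x (a i0)) - A.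
pose B (f : {ffun 'I_tau -> ({ffun 'I_n -> 'I_t} * {ffun 'I_n -> bool})}) := \sum_k Zm m f k 0 * Ug (f i0) k.
have dec : forall f, Vm m.+1 f = Vm m f + 2 * B f + Dg (f i0).
  move=> f; rewrite /Vm (Zstep _ e0) (mustep e0) sqnormD /Dg /B /Ug /A; ring.
have Hh := Hf.2.1 i0. have Hs := Hf.2.2.1 i0. have Hind := Hf.2.2.2 i0.
have EUi : forall k, Ex (Pm p XX i0) (fun x => Ug x k) = 0.
  by move=> k; rewrite Pm_E /XX /Ug /=; exact: EU Hs Hind (a i0) k.
have EUUi : forall k k', Ex (Pm p XX i0) (fun x => Ug x k * Ug x k') = (k == k')%:R * A / t%:R.
  by move=> k k'; rewrite Pm_E /XX /Ug /=; exact: EUU Hp Hh Hs Hind (a i0) k k'.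
have EDi : Ex (Pm p XX i0) Dg = 0.
  by rewrite Pm_E /XX /Dg /=; exact: ED Hp Hh Hs Hind tpos (a i0).
have ED2i : Ex (Pm p XX i0) (fun x => Dg x ^+ 2) <= 2 * A ^+ 2 / t%:R.
  by rewrite Pm_E /XX /Dg /=; exact: ED2 Hp Hh Hs Hind tpos (a i0).
have EB : Ex (mu p XX) B = 0.
  rewrite /B Ex_sum big1 // => k _.
  rewrite (split_indep XX Hp (i0 := i0) (F := fun f => Zm m f k 0) (fun x => Ug x k)); last first.
    by move=> f x; rewrite (Zinv e0).
  by rewrite EUi mulr0.
have EVB : Ex (mu p XX) (fun f => Vm m f * B f) = 0.
  rewrite (@Ex_ext _ _ _ (fun f => \sum_k (Vm m f * Zm m f k 0) * Ug (f i0) k)); last first.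
    by move=> f; rewrite /B mulr_sumr; apply: eq_bigr => k _; rewrite mulrA.
  rewrite Ex_sum big1 // => k _.
  rewrite (split_indep XX Hp (i0 := i0) (F := fun f => Vm m f * Zm m f k 0) (fun x => Ug x k)); last first.
    by move=> f x; rewrite (Zinv e0) (Vinv e0).
  by rewrite EUi mulr0.
have EVD : Ex (mu p XX) (fun f => Vm m f * Dg (f i0)) = 0.
  rewrite (split_indep XX Hp (i0 := i0) (F := fun f => Vm m f) Dg); last first.
    by move=> f x; rewrite (Vinv e0).
  by rewrite EDi mulr0.
have EBD : Ex (mu p XX) (fun f => B f * Dg (f i0)) = 0.
  rewrite (@Ex_ext _ _ _ (fun f => \sum_k Zm m f k 0 * (Ug (f i0) k * Dg (f i0)))); last first.
    by move=> f; rewrite /B mulr_suml; apply: eq_bigr => k _; rewrite mulrA.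
  rewrite Ex_sum big1 // => k _.
  rewrite (split_indep XX Hp (i0 := i0) (F := fun f => Zm m f k 0) (fun x => Ug x k * Dg x)); last first.
    by move=> f x; rewrite (Zinv e0).
  by rewrite EZ mul0r.
have ED' : Ex (mu p XX) (fun f => Dg (f i0)) = 0.
  by rewrite (Ex_mu_coord Hp Hmi i0 Dg).
have ED2' : Ex (mu p XX) (fun f => Dg (f i0) ^+ 2) <= 2 * A ^+ 2 / t%:R.
  by rewrite (Ex_mu_coord Hp Hmi i0 (fun x => Dg x ^+ 2)).
have EB2 : Ex (mu p XX) (fun f => B f ^+ 2) = mum m * A / t%:R.
  rewrite (@Ex_ext _ _ _ (fun f => \sum_k \sum_k' (Zm m f k 0 * Zm m f k' 0) * (Ug (f i0) k * Ug (f i0) k'))); last first.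
    move=> f; rewrite /B expr2 big_distrlr /=; apply: eq_bigr => k _.
    apply: eq_bigr => k' _; ring.
  rewrite Ex_sum.
  rewrite (eq_bigr (fun k => Ex (mu p XX) (fun f => Zm m f k 0 * Zm m f k 0) * (A / t%:R))); last first.
    move=> k _; rewrite Ex_sum.
    rewrite (eq_bigr (fun k' => (Ex (mu p XX) (fun f => Zm m f k 0 * Zm m f k' 0) * (A / t%:R)) * (k' == k)%:R)); last first.
      move=> k' _.
      rewrite (split_indep XX Hp (i0 := i0) (F := fun f => Zm m f k 0 * Zm m f k' 0) (fun x => Ug x k * Ug x k')); last first.
        by move=> f x; rewrite (Zinv e0).
      rewrite EUUi eq_sym; ring.
    by rewrite sum_ind_r.
  rewrite -mulr_suml -Ex_sum.
  have -> : Ex (mu p XX) (fun f => \sum_k Zm m f k 0 * Zm m f k 0) = mum m.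
    rewrite (@Ex_ext _ _ _ (fun f => Vm m f + mum m)); last first.
      by move=> f; rewrite /Vm subrK /sqnorm; apply: eq_bigr => k _; rewrite expr2.
    have smu : \sum_f mu p XX f = 1 by rewrite -(Ex_mu1 Hp Hmi) Ex_const mul1r.
    by rewrite ExD IH1 add0r Ex_const smu mulr1.
  by rewrite mulrA.
split.
  rewrite (Ex_ext _ dec) ExD ExD ExZ EB IH1' ED'; ring.
have eV2 : Ex (mu p XX) (fun f => Vm m.+1 f ^+ 2) =
  Ex (mu p XX) (fun f => Vm m f ^+ 2) + 4 * Ex (mu p XX) (fun f => B f ^+ 2)
  + Ex (mu p XX) (fun f => Dg (f i0) ^+ 2) + 4 * Ex (mu p XX) (fun f => Vm m f * B f)
  + 2 * Ex (mu p XX) (fun f => Vm m f * Dg (f i0)) + 4 * Ex (mu p XX) (fun f => B f * Dg (f i0)).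
  rewrite -!ExZ -!ExD; apply: Ex_ext => f; rewrite dec; ring.
rewrite eV2 EB2 EVB EVD EBD (mustep e0) -/A.
have tn : (t%:R : R) != 0 by rewrite pnatr_eq0 -lt0n.
have : Ex (mu p XX) (fun f => Vm m f ^+ 2) + Ex (mu p XX) (fun f => Dg (f i0) ^+ 2)
   <= 2 * mum m ^+ 2 / t%:R + 2 * A ^+ 2 / t%:R by apply: lerD.
move=> le1.
have -> : 2 * (mum m + A) ^+ 2 / t%:R = 2 * mum m ^+ 2 / t%:R + 2 * A ^+ 2 / t%:R + 4 * (mum m * A / t%:R).
  by field.
rewrite !mulr0 !addr0.
move: le1; set x := Ex _ _; set y := Ex _ _ => le1.
have -> : x + 4 * (mum m * A / t%:R) + y = (x + y) + 4 * (mum m * A / t%:R) by ring.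
by rewrite lerD2r.
Qed.

End Main.


Lemma Pr_compl (Om : finType) (p : Om -> R) (E : Om -> bool) :
  is_pmf p -> Pr p E = 1 - Pr p (fun w => ~~ E w).
Proof.
move=> Hp; rewrite -Hp.2 (bigID E) /=; rewrite /Pr; ring.
Qed.

Lemma cheb (Om : finType) (p : Om -> R) (V : Om -> R) (d : R) :
  is_pmf p -> 0 <= d ->
  d ^+ 2 * Pr p (fun w => ~~ (`|V w| <= d)) <= Ex p (fun w => V w ^+ 2).
Proof.
move=> Hp d0; rewrite /Pr mulr_sumr /Ex.
rewrite [X in _ <= X](bigID (fun w => ~~ (`|V w| <= d))) /=.
have r0 : 0 <= \sum_(i | ~~ ~~ (`|V i| <= d)) V i ^+ 2 * p i.
  by apply: sumr_ge0 => w _; apply: mulr_ge0; [apply: sqr_ge0 | apply: Hp.1].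
rewrite -[X in X <= _]addr0; apply: lerD => //.
apply: ler_sum => w; rewrite -ltNge => lt.
apply: ler_wpM2r; first exact: Hp.1.
rewrite -(real_normK (num_real (V w))).
by apply: lerXn2r; rewrite ?nnegrE ?normr_ge0 // ltW.
Qed.

Lemma sqnormZ k c (v : 'cV[R]_k) : sqnorm (c *: v) = c ^+ 2 * sqnorm v.
Proof. by rewrite /sqnorm mulr_sumr; apply: eq_bigr => i _; rewrite mxE exprMn. Qed.

Lemma sqnorm_ge0 k (v : 'cV[R]_k) : 0 <= sqnorm v.
Proof. apply: sumr_ge0 => i _; exact: sqr_ge0. Qed.

Theorem theorem2 :
  exists C : R, 0 < C /\
  forall (tau n m t : nat), (0 < tau)%nat -> (0 < n)%nat -> (0 < m)%nat -> (0 < t)%nat ->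
  forall (W : 'I_tau -> 'M[R]_(n, m)) (alpha : 'I_tau -> R),
  (forall i, 0 <= alpha i) ->
  forall (Omega : finType) (p : Omega -> R)
         (h : 'I_tau -> Omega -> {ffun 'I_n -> 'I_t})
         (s : 'I_tau -> Omega -> {ffun 'I_n -> bool}),
  is_pmf p -> countsketch_family p h s ->
  forall theta : 'cV[R]_m,
  Pr p (fun w =>
    `| sqnorm ((\sum_(i < tau) Num.sqrt (alpha i) *:
                  (countsketch (h i w) (s i w) *m W i)) *m theta)
       - \sum_(i < tau) alpha i * sqnorm (W i *m theta) |
    <= C / Num.sqrt (t%:R) * \sum_(i < tau) alpha i * sqnorm (W i *m theta))
  >= 99%:R / 100%:R.
Proof.
exists 20; split; first by rewrite ltr0n.
move=> tau n m t tau0 n0 m0 t0 W alpha Ha Om p h s Hp Hf theta.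
pose a i := Num.sqrt (alpha i) *: (W i *m theta).
have eM : \sum_(i < tau) alpha i * sqnorm (W i *m theta) = mum a tau.
  rewrite /mum; apply: eq_big => [i|i _]; first by rewrite ltn_ord.
  by rewrite /a sqnormZ sqr_sqrtr.
have eX : forall w, (\sum_(i < tau) Num.sqrt (alpha i) *: (countsketch (h i w) (s i w) *m W i)) *m theta
   = Zm a tau [ffun i => XX h s i w].
  move=> w; rewrite mulmx_suml /Zm; apply: eq_big => [i|i _]; first by rewrite ltn_ord.
  by rewrite ffunE /Uv /XX /= /a -scalemxAr mulmxA scalemxAl.
rewrite eM.
have [_ EV2] := Vmain Hp Hf t0 a (leqnn tau).
set M := mum a tau.
pose V w := Vm a tau [ffun i => XX h s i w].
rewrite /Pr (eq_bigl (fun w => `|V w| <= 20 / Num.sqrt t%:R * M)); last first.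
  by move=> w; rewrite eX.
rewrite -/(Pr p _) (Pr_compl _ Hp).
have E2 : Ex p (fun w => V w ^+ 2) <= 2 * M ^+ 2 / t%:R.
  by rewrite /V (E_Y (Hmi Hf) (fun f => Vm a tau f ^+ 2)).
have M0 : 0 <= M by apply: sumr_ge0 => i _; exact: sqnorm_ge0.
have st : 0 < Num.sqrt (t%:R : R) by rewrite sqrtr_gt0 ltr0n.
set d := 20 / Num.sqrt t%:R * M.
have d0 : 0 <= d by apply: mulr_ge0 => //; apply: divr_ge0 => //; exact: ltW.
have ch := cheb V Hp d0.
set q := Pr p _ in ch *.
have q0 : 0 <= q by apply: sumr_ge0 => w _; exact: Hp.1.
case: (eqVneq M 0) => [M00|Mn0].
  have S0 : \sum_w V w ^+ 2 * p w = 0.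
    apply/eqP; rewrite eq_le; apply/andP; split.
      by move: E2; rewrite /Ex M00 expr0n /= mulr0 mul0r.
    by apply: sumr_ge0 => w _; apply: mulr_ge0; [apply: sqr_ge0|apply: Hp.1].
  have e0 := psumr_eq0P (fun w _ => mulr_ge0 (sqr_ge0 (V w)) (Hp.1 w)) S0.
  have -> : q = 0.
    rewrite /q /Pr big1 // => w.
    rewrite /d M00 mulr0 -ltNge normr_gt0 => Vn0.
    have := e0 w isT; move/eqP; rewrite mulf_eq0 => /orP [|/eqP //].
    by rewrite expf_eq0 /= (negbTE Vn0).
  by rewrite subr0 ler_pdivrMr ?ltr0n // mul1r ler_nat.
have Mp : 0 < M by rewrite lt_def Mn0 M0.
have tp : 0 < (t%:R : R) by rewrite ltr0n.
have d2 : d ^+ 2 = 400 * (M ^+ 2 / t%:R).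
  rewrite /d !exprMn exprVn sqr_sqrtr ?ler0n //; field.
  by rewrite lt0r_neq0.
have K0 : 0 < M ^+ 2 / t%:R by apply: divr_gt0 => //; exact: exprn_gt0.
have : 400 * (M ^+ 2 / t%:R) * q <= 2 * (M ^+ 2 / t%:R).
  rewrite -d2; apply: le_trans ch _; by rewrite mulrA.
set K := M ^+ 2 / t%:R => hK.
have hq : q <= 2 / 400.
  rewrite ler_pdivlMr ?ltr0n //.
  have : K * (400 * q) <= K * 2 by rewrite mulrCA mulrA [K * 2]mulrC.
  by rewrite ler_pM2l // mulrC.
rewrite ler_pdivrMr ?ltr0n //; lra.
Qed.
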